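(* Let $(\Omega,\Sigma,\mathbb{P})$ be a probability space and let $X_t:\Omega\to[0,\infty)$, $t\in\mathbb{N}$, be random variables such that $A:=\limsup_{t\to\infty}(E[X_t])^{1/t}<1$. For $\varepsilon>0$ let $\tau_\varepsilon:=\inf\{t\in\mathbb{N}: X_t<\varepsilon\}$. Then $$\limsup_{\varepsilon\to0^+}\frac{E[\tau_\varepsilon]}{|\log\varepsilon|}\leq\frac{-1}{\log A}.$$
   Context: Convention: if $E[X_t]=\infty$ then $(E[X_t])^{1/t}:=\infty$; if $A=0$ then $\frac{-1}{\log A}:=0$. $\log$ is the natural logarithm. *)

(* Defs.v *)
From HB Require Import structures.
From mathcomp Require Import all_boot all_order all_algebra.
From mathcomp Require Import all_classical all_reals all_analysis.
Set Implicit Arguments. Unset Strict Implicit. Unset Printing Implicit Defensive.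
Import Order.TTheory GRing.Theory Num.Theory numFieldTopology.Exports numFieldNormedType.Exports.
Local Open Scope classical_set_scope.
Local Open Scope ring_scope.

(* Hitting time tau_eps(w) = inf {t in N | X_t(w) < eps}, valued in \bar R
   (inf of the empty set is +oo). *)
Definition hitting_time {T : Type} {R : realType} (X : nat -> T -> R) (eps : R)
  (w : T) : \bar R :=
  ereal_inf [set (t%:R)%:E | t in [set t : nat | X t w < eps]].

Definition neg_inv_log {R : realType} (A : \bar R) : \bar R :=
  if A == 0%E then 0%E else ((-1) / ln (fine A))%:E.

(* Main.v *)
Require Import Defs.
From HB Require Import structures.
From mathcomp Require Import all_boot all_order all_algebra.
From mathcomp Require Import all_classical all_reals all_analysis.
From mathcomp Require Import measurable_realfun.
Import Order.TTheory GRing.Theory Num.Theory numFieldTopology.Exports numFieldNormedType.Exports.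
Local Open Scope classical_set_scope.
Local Open Scope ring_scope.

Section helpers.
Context d (T : measurableType d) (R : realType).
Local Open Scope ereal_scope.

Lemma le_int_nm (mu : {measure set T -> \bar R}) (f g : T -> \bar R) :
  (forall x, 0 <= f x) -> (forall x, f x <= g x) ->
  \int[mu]_x f x <= \int[mu]_x g x.
Proof.
move=> f0 fg; have g0 x : 0 <= g x by apply: le_trans (f0 x) (fg x).
rewrite !ge0_integralTE//; apply: ereal_sup_le => _ [h hf <-]; exists h => //.
by move=> x; apply: le_trans (hf x) (fg x).
Qed.

Lemma hitting_ge0 (X : nat -> T -> R) eps w : 0 <= hitting_time X eps w.
Proof. by apply: le_ereal_inf_tmp => _ [t _ <-]; rewrite lee_fin. Qed.

Lemma hit_le (X : nat -> T -> R) (eps : R) (w : T) (h : nat -> \bar R) :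
  (forall k, 0 <= h k) -> (forall k, (eps <= X k w)%R -> 1 <= h k) ->
  hitting_time X eps w <= \sum_(0 <= k <oo) h k.
Proof.
move=> h0 h1.
have S0 : 0 <= \sum_(0 <= k <oo) h k by apply: nneseries_ge0 => k _ _.
move: S0; case ES : (\sum_(0 <= k <oo) h k) => [s| |]; [|by move=> _; rewrite leey|by rewrite leNgt ltNye].
rewrite lee_fin => s0.
have /andP[tl tu] := truncn_itv s0.
case: (pselect (exists2 k, (k < (Num.Def.trunc s).+1)%N & (X k w < eps)%R)).
  move=> [k kn Xk]; apply: (@le_trans _ _ (k%:R%:E)).
    by apply: ereal_inf_lbound; exists k.
  rewrite lee_fin; apply: le_trans tl; by rewrite ler_nat -ltnS.
move=> nok; exfalso.
have : ((Num.Def.trunc s).+1%:R%:E <= \sum_(0 <= k <oo) h k).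
  apply: le_trans (nneseries_lim_ge (Num.Def.trunc s).+1 _); last by move=> n _ _.
  have -> : ((Num.Def.trunc s).+1%:R : R)%:E = \sum_(0 <= i < (Num.Def.trunc s).+1) (1%R : R)%:E.
    by rewrite sumEFin sumr_const_nat subn0.
  rewrite !big_mkord; apply: lee_sum => i _; apply: h1.
  rewrite leNgt; apply/negP => Xi; apply: nok; exists i => //.
by rewrite ES lee_fin => /(lt_le_trans tu); rewrite ltxx.
Qed.

Lemma geo_bound (a eps : R) (M n : nat) : (0 < a < 1)%R -> (0 < eps)%R ->
  (a ^+ M <= eps)%R -> (M <= n)%N ->
  (\sum_(M <= i < n) (a ^+ i / eps) <= (1 - a)^-1)%R.
Proof.
move=> /andP[a0 a1] e0 aM Mn.
rewrite -mulr_suml -(subnKC Mn) geometric_partial_tail ler_pdivrMr//.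
have := @geometric_le_lim R (n - M) (a ^+ M) a (exprn_ge0 _ (ltW a0)) a0.
rewrite gtr0_norm// => /(_ a1) /le_trans; apply.
rewrite mulrC ler_wpM2l// invr_ge0 subr_ge0 ltW//.
Qed.

End helpers.

Lemma key (d : measure_display) (T : measurableType d) (R : realType)
  (P : probability T R) (X : nat -> T -> R)
  (mX : forall t, measurable_fun setT (X t))
  (X_ge0 : forall t w, 0 <= X t w) (a δ : R) :
  0 < a < 1 -> 0 < δ ->
  (limn_esup (fun t : nat =>
           poweR (\int[P]_w (X t w)%:E) (t%:R^-1)) < a%:E)%E ->
  (@limf_esup R R R (fun eps : R =>
      (\int[P]_w hitting_time X eps w) * (`|ln eps|^-1)%:E)%E (0 : R)^'+
   <= ((- ln a)^-1 + δ)%:E)%E.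
Proof.
move=> /andP[a0 a1] δ0 hA.
have [t0 Ht0] : exists t0, forall t, (t0 <= t)%N ->
    (poweR (\int[P]_w (X t w)%:E) (t%:R^-1) < a%:E)%E.
  move: hA; rewrite /limn_esup limf_esupE => /ereal_inf_lt[_ [V [N _ HN] <-]] Vlt.
  exists N => t Nt; apply: le_lt_trans Vlt; apply: ereal_sup_ubound; exists t => //.
  exact: HN.
pose T1 := maxn t0 1.
have HE : forall t, (T1 <= t)%N -> (\int[P]_w (X t w)%:E <= (a ^+ t)%:E)%E.
  move=> t; rewrite geq_max => /andP[t0t t1].
  have := Ht0 t t0t.
  have : (0 <= \int[P]_w (X t w)%:E)%E.
    by apply: integral_ge0 => w _; rewrite lee_fin.
  have tn0 : (t%:R : R)^-1 != 0 by rewrite invr_eq0 pnatr_eq0 -lt0n.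
  case: (\int[P]_w _)%E => [y| |].
  - rewrite lee_fin => y0; rewrite poweR_EFin lte_fin => ha.
    rewrite lee_fin.
    have -> : y = (y `^ t%:R^-1) `^ t%:R.
      by rewrite -powRrM mulVf ?powRr1// -invr_eq0.
    rewrite -powR_mulrn ?(ltW a0)//.
    apply: ge0_ler_powR => //; last exact: ltW.
    by rewrite nnegrE powR_ge0.
    by rewrite nnegrE ltW.
  - by move=> _; rewrite poweRyr// ltNge leey.
  - by rewrite leNgt ltNye.
pose C := (T1%:R + 1 + (1 - a)^-1 : R).
have a1' : 0 < 1 - a by rewrite subr_gt0.
have C0 : 0 < C by rewrite /C ltr_wpDl ?invr_gt0// addr_ge0.
pose e1 := expR (- (C / δ)).
rewrite limf_esupE.
apply: le_trans (ereal_inf_lbound _) _.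
  exists [set x | 0 < x < e1]; last reflexivity.
  near=> x; apply/andP; split; near: x; [exact: nbhs_right_gt|].
  by apply: nbhs_right_lt; exact: expR_gt0.
apply: ge_ereal_sup => _ [eps /andP[eps0 epse1] <-].
have Le : ln eps < - (C / δ).
  by rewrite -[X in _ < X]expRK ltr_ln// posrE expR_gt0.
pose L := - ln eps.
have L0 : 0 < L by rewrite /L oppr_gt0 (lt_trans Le)// oppr_lt0 divr_gt0.
have lna0 : 0 < - ln a by rewrite oppr_gt0 ln_lt0// a0 a1.
have xge0 : 0 <= L / - ln a by rewrite divr_ge0// ltW.
have /andP[tl tu] := truncn_itv xge0.
pose N := (Num.Def.trunc (L / - ln a)).+1.
pose M := (T1 + N)%N.
have aM : a ^+ M <= eps.
  apply: (@le_trans _ _ (a ^+ N)).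
    by apply: ler_wiXn2l; [exact: ltW|exact: ltW|rewrite leq_addl].
  apply: ltW; rewrite -ltr_ln ?posrE ?exprn_gt0// lnXn// -mulr_natr.
  rewrite -[ln eps]opprK -/L ltrNr -mulNr -ltr_pdivrMl//.
  by rewrite mulrC.
have Etau : (\int[P]_w hitting_time X eps w <= (M%:R + (1 - a)^-1)%:E)%E.
  pose h := fun k : nat => if (k < M)%N then (fun _ : T => 1%E)
    else (fun w => (X k w / eps)%:E).
  have h0 k w : (0 <= h k w)%E.
    by rewrite /h; case: ifP => _ /=; [exact: lee01|rewrite lee_fin divr_ge0// ltW].
  have mh k : measurable_fun [set: T] (fun w => (h k w : \bar R)).
    rewrite /h; case: ifP => _; first exact: measurable_cst.
    apply/measurable_EFinP.
    exact: (measurable_funM (mX k) (measurable_cst _)).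
  apply: le_trans (@le_int_nm _ _ _ P (hitting_time X eps)
    (fun w => \sum_(0 <= k <oo) h k w)%E (@hitting_ge0 _ _ _ X eps) _) _.
    move=> w; apply: hit_le => // k Xk; rewrite /h; case: ifP => _ //=.
    by rewrite lee_fin ler_pdivlMr// mul1r.
  rewrite integral_nneseries//.
  apply: lime_le.
    by apply: is_cvg_nneseries => n _ _; apply: integral_ge0 => w _; exact: h0.
  near=> n.
  have Mn : (M <= n)%N by near: n; exists M.
  rewrite (big_cat_nat (leq0n M) Mn) /=.
  apply: (@le_trans _ _ (\sum_(0 <= i < M) (1%R : R)%:E +
    \sum_(M <= i < n) (a ^+ i / eps)%:E)%E).
    apply: leeD.
      rewrite le_eqVlt; apply/orP; left; apply/eqP; apply: eq_big_nat.
      move=> i /andP[_ iM].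
      by rewrite /h iM /= integral_cst// mul1e; apply: probability_setT.
    rewrite big_nat_cond [X in (_ <= X)%E]big_nat_cond.
    apply: lee_sum => i /andP[/andP[Mi _] _].
    rewrite /h ifF; last by rewrite ltnNge Mi.
    rewrite (eq_integral (fun w => (X i w)%:E * (eps^-1)%:E))%E; last first.
      by move=> w _; rewrite EFinM.
    rewrite ge0_integralZr//; last 3 first.
    - exact/measurable_EFinP.
    - by move=> w _; rewrite lee_fin.
    - by rewrite lee_fin invr_ge0 ltW.
    rewrite EFinM; apply: lee_wpmul2r; first by rewrite lee_fin invr_ge0 ltW.
    by apply: HE; exact: leq_trans (leq_addr _ _) Mi.
  rewrite !sumEFin -EFinD lee_fin sumr_const_nat subn0 lerD2l.
  by apply: geo_bound => //; rewrite a0 a1.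
have lneps : ln eps < 0 by rewrite -oppr_gt0.
rewrite ltr0_norm// -/L.
apply: le_trans (lee_wpmul2r _ Etau) _; first by rewrite lee_fin invr_ge0 ltW.
rewrite -EFinM lee_fin.
have hN : (N%:R : R) <= L / - ln a + 1 by rewrite /N -addn1 natrD lerD2r.
apply: (@le_trans _ _ ((L / - ln a + C) / L)).
  rewrite ler_pM2r ?invr_gt0// /M natrD /C.
  apply: le_trans (lerD (lerD (lexx (T1%:R : R)) hN) (lexx ((1 - a)^-1))) _.
  by rewrite addrCA !addrA.
rewrite mulrDl mulrAC divff ?gt_eqF// mul1r lerD2l ler_pdivrMr//.
have : C / δ < L by rewrite /L ltrNr.
by rewrite ltr_pdivrMr// mulrC => /ltW.
Unshelve. all: by end_near.
Qed.

Theorem theorem2 (d : measure_display) (T : measurableType d) (R : realType)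
  (P : probability T R) (X : nat -> T -> R)
  (mX : forall t, measurable_fun setT (X t))
  (X_ge0 : forall t w, 0 <= X t w)
  (hA : (limn_esup (fun t : nat =>
           poweR (\int[P]_w (X t w)%:E) (t%:R^-1)) < 1)%E) :
  (@limf_esup R R R (fun eps : R =>
      (\int[P]_w hitting_time X eps w) * (`|ln eps|^-1)%:E)%E (0 : R)^'+
   <= neg_inv_log (limn_esup (fun t : nat =>
           poweR (\int[P]_w (X t w)%:E) (t%:R^-1))))%E.
Proof.
set A := limn_esup _ in hA *.
have A0 : (0 <= A)%E.
  rewrite /A /limn_esup; apply: limf_esup_ge0; first exact: filter_not_empty.
  by move=> t; exact: poweR_ge0.
have Afin : A \is a fin_num by rewrite ge0_fin_numE// (lt_trans hA) ?ltry.
pose r := fine A.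
have Ar : A = r%:E by rewrite /r fineK.
have r0 : 0 <= r by rewrite -lee_fin -Ar.
have r1 : r < 1 by rewrite -lte_fin -Ar.
pose c := if r == 0 then 0 else (-1) / ln r.
have Hc : neg_inv_log A = c%:E.
  rewrite /neg_inv_log Ar /c; case: (eqVneq r 0) => [->|rn0] /=; first by rewrite !eqxx.
  by rewrite eqe (negbTE rn0).
have Hs : forall s, c < s -> r < expR (- s^-1).
  move=> s cs; case: (eqVneq r 0) => [r00|rn0]; first by rewrite r00 expR_gt0.
  have rpos : 0 < r by rewrite lt0r rn0 r0.
  have lnr : ln r < 0 by rewrite ln_lt0 // rpos r1.
  move: cs; rewrite /c (negbTE rn0) mulN1r => cs.
  have s0 : 0 < s by apply: lt_trans _ cs; rewrite oppr_gt0 invr_lt0.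
  rewrite -[r]lnK ?posrE// ltr_expR ltrNr.
  rewrite -(invrK (- ln r)) ltf_pV2 ?posrE ?invr_gt0 ?oppr_gt0// invrN.
  exact: cs.
have c0 : 0 <= c.
  rewrite /c; case: eqP => // /eqP rn0'; rewrite mulN1r oppr_ge0 invr_le0 ltW//.
  by rewrite ln_lt0// lt0r rn0' r0 r1.
rewrite Hc; apply/lee_addgt0Pr => δ δ0.
pose s := c + δ / 2.
have h2 : 0 < δ / 2 by rewrite divr_gt0.
have s0 : 0 < s by rewrite /s ltr_wpDl.
pose a := expR (- s^-1).
have a01 : 0 < a < 1 by rewrite expR_gt0 expR_lt1 oppr_lt0 invr_gt0.
have ha : (A < a%:E)%E by rewrite Ar lte_fin; apply: Hs; rewrite /s ltrDl.
have := @key d T R P X mX X_ge0 a (δ / 2) a01 h2 ha.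
rewrite /a expRK opprK invrK => /le_trans; apply.
by rewrite lee_fin /s -addrA -splitr.
Qed.
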